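(* In the two-project discovery model described in the context, suppose the principal's payoff is $1$ if at least one project is approved (i.e., she proposes a nonempty set $S$ and it is approved) and $0$ otherwise, and suppose $\mu_1<\mu_2<0$. Then discovering the project $i$ satisfying $\sigma_i/\mu_i<\sigma_j/\mu_j$ (where $\{i,j\}=\{1,2\}$) is better than discovering project $j$, and discovering both project values is strictly better than discovering either project value individually.
   Context: Model. There are two projects $i\in\{1,2\}$. The agent's values $v=(v_1,v_2)\in\mathbb{R}^2$ are drawn from a common prior that is bivariate normal with means $\mu_1,\mu_2$, standard deviations $\sigma_1,\sigma_2>0$ and correlation $\rho\in(0,1)$. Timing: (1) the principal chooses which project values to publicly discover (project 1's value, project 2's value, or both); (2) the chosen values are publicly revealed and the agent forms a posterior by Bayes' rule; (3) knowing the revealed values, the principal proposes a subset $S\subseteq\{1,2\}$; (4) the agent approves iff $\sum_{i\in S}\mathbb{E}[v_i\mid\text{revealed information}]\ge 0$. The principal chooses the proposal to maximize her payoff given the revealed information, and one discovery rule is better than another if its ex-ante expected payoff is strictly higher. *)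

(* Defs.v *)
From HB Require Import structures.
From mathcomp Require Import all_boot all_order all_algebra.
From mathcomp Require Import all_classical all_reals all_analysis.
Set Implicit Arguments. Unset Strict Implicit. Unset Printing Implicit Defensive.
Import Order.TTheory GRing.Theory Num.Theory.
Local Open Scope ring_scope.

Definition bvn_pdf {R : realType} (mu1 mu2 s1 s2 rho : R) (v : R * R) : R :=
  let z1 := (v.1 - mu1) / s1 in
  let z2 := (v.2 - mu2) / s2 in
  (2 * pi * s1 * s2 * Num.sqrt (1 - rho ^+ 2))^-1 *
  expR (- (z1 ^+ 2 - 2 * rho * z1 * z2 + z2 ^+ 2) / (2 * (1 - rho ^+ 2))).

Inductive discovery := Disc1 | Disc2 | DiscBoth.

(* Posterior means (E[v_1 | info], E[v_2 | info]) of the agent after the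
   revealed values, computed by Bayes' rule for the bivariate normal prior. *)
Definition posterior_mean {R : realType} (mu1 mu2 s1 s2 rho : R)
    (D : discovery) (v : R * R) : 'I_2 -> R :=
  fun k =>
  match D with
  | DiscBoth => if k == ord0 then v.1 else v.2
  | Disc1 => if k == ord0 then v.1 else mu2 + rho * s2 / s1 * (v.1 - mu1)
  | Disc2 => if k == ord0 then mu1 + rho * s1 / s2 * (v.2 - mu2) else v.2
  end.

Definition approves {R : realType} (m : 'I_2 -> R) (S : {set 'I_2}) : bool :=
  0 <= \sum_(i in S) m i.

Definition principal_utility {R : realType} (S : {set 'I_2}) (approved : bool) : R :=
  if (S != finset.set0) && approved then 1 else 0.

Definition optimal_payoff {R : realType} (m : 'I_2 -> R) : R :=
  \big[Num.max/0]_(S : {set 'I_2}) principal_utility S (approves m S).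

Definition expected_payoff {R : realType} (mu1 mu2 s1 s2 rho : R) (D : discovery)
    : \bar R :=
  (\int[(@lebesgue_measure R) \x (@lebesgue_measure R)]_(v in [set: R * R])
     (optimal_payoff (posterior_mean mu1 mu2 s1 s2 rho D v)
        * bvn_pdf mu1 mu2 s1 s2 rho v)%:E)%E.

(* Main.v *)
Require Import Defs.
From HB Require Import structures.
From mathcomp Require Import all_boot all_order all_algebra.
From mathcomp Require Import all_classical all_reals all_analysis.
From mathcomp Require Import ring lra measurable_realfun.
Import Order.TTheory GRing.Theory Num.Theory.
Import numFieldNormedType.Exports.
Set Implicit Arguments. Unset Strict Implicit. Unset Printing Implicit Defensive.
Local Open Scope ring_scope.

Section H0.
Variable R : realType.
Local Open Scope classical_set_scope.
Definition i1 : 'I_2 := @Ordinal 2 1 isT.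

Lemma opt_payoffE (m : 'I_2 -> R) :
  optimal_payoff m = if (0 <= m ord0) || (0 <= m i1) then 1 else 0.
Proof.
have ut01 S : principal_utility S (approves m S) <= 1 :> R.
  by rewrite /principal_utility; case: ifP => _ //; rewrite ler01.
case: ifP => H.
  apply/eqP; rewrite eq_le; apply/andP; split.
    by apply: bigmax_le => //; rewrite ler01.
  have [i Hi] : exists i, 0 <= m i.
    by case/orP: H => H; [exists ord0|exists i1].
  rewrite /optimal_payoff (bigmaxD1 [set i]%SET) // le_max; apply/orP; left.
  rewrite /principal_utility /approves big_set1 Hi andbT.
  by rewrite (_ : [set i]%SET != finset.set0) //; apply/set0Pn; exists i; rewrite finset.in_set1.
apply/eqP; rewrite eq_le; apply/andP; split; last first.
  exact: bigmax_ge_id.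
apply: bigmax_le => // S _.
rewrite /principal_utility /approves.
case: (set_0Vmem S) => [->|[i iS]]; first by rewrite eqxx.
have neg j : m j < 0.
  move/negbT: H; rewrite negb_or -!ltNge => /andP[h0 h1].
  by case: j => -[|[|//]] Hj; [rewrite (_ : Ordinal Hj = ord0) //; exact/val_inj
                                 |rewrite (_ : Ordinal Hj = i1) //; exact/val_inj].
rewrite (bigD1 i) //=.
have : \sum_(j in S | j != i) m j <= 0.
  by apply: sumr_le0 => j _; exact: ltW.
move=> hle.
have -> : 0 <= m i + \sum_(j in S | j != i) m j = false.
  by apply/negbTE; rewrite -ltNge; apply: (lt_le_trans (ltr_leD (neg i) hle)); rewrite addr0.
by rewrite andbF.
Qed.

Lemma alg_id (F : numFieldType) (a b rho S1 S2 : F) : S1 != 0 -> S2 != 0 -> 1 - rho^+2 != 0 ->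
 -(a^+2 - 2*rho*a*b + b^+2)/(2*(1-rho^+2)) = -(a^+2*S1)/(S1*+2) + -(S2*(b-rho*a)^+2)/(S2*(1-rho^+2)*+2).
Proof. move=> h1 h2 h3. field. rewrite h1 h2 h3 /=. by []. Qed.

Lemma sqrt_peak (s : R) : 0 < s -> Num.sqrt (s ^+ 2 * pi *+ 2) = s * Num.sqrt (pi *+ 2).
Proof.
move=> s0; rewrite -mulrnAr sqrtrM ?sqr_ge0 // sqrtr_sqr gtr0_norm //.
Qed.

Lemma bvn_fact (mu1 mu2 s1 s2 rho x y : R) : 0 < s1 -> 0 < s2 -> 0 < rho -> rho < 1 ->
  bvn_pdf mu1 mu2 s1 s2 rho (x, y) =
  normal_pdf mu1 s1 x *
  normal_pdf (mu2 + rho * s2 / s1 * (x - mu1)) (s2 * Num.sqrt (1 - rho ^+ 2)) y.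
Proof.
move=> hs1 hs2 hr0 hr1.
have hw2 : 0 < 1 - rho ^+ 2 by rewrite subr_gt0 expr_lt1 // ltW.
set w := Num.sqrt (1 - rho ^+ 2).
have hw : 0 < w by rewrite sqrtr_gt0.
have ww : w ^+ 2 = 1 - rho ^+ 2 by rewrite sqr_sqrtr // ltW.
have hpi : 0 < pi *+ 2 :> R by rewrite pmulrn_lgt0 // pi_gt0.
rewrite normal_pdfE ?gt_eqF // normal_pdfE ?gt_eqF ?mulr_gt0 //.
rewrite /bvn_pdf /normal_peak /normal_fun /=.
rewrite [RHS]mulrACA -expRD !sqrt_peak ?mulr_gt0 // -/w.
congr (_ * expR _).
  rewrite -invfM; congr (_^-1).
  set q := Num.sqrt (pi *+ 2).
  have hh : q * q = pi *+ 2 :> R.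
    by rewrite -expr2 sqr_sqrtr // ltW.
  rewrite (_ : s1 * q * (s2 * w * q) = s1 * s2 * w * (q * q)); last by ring.
  rewrite hh; ring.
set a := (x - mu1) / s1. set b := (y - mu2) / s2.
have e1 : x - mu1 = a * s1 by rewrite /a divfK ?gt_eqF.
have e2 : y - (mu2 + rho * s2 / s1 * (x - mu1)) = s2 * (b - rho * a).
  rewrite /b /a; field; by rewrite ?gt_eqF.
clearbody a b w.
rewrite e2 e1 !exprMn ww.
have s1n : s1 ^+ 2 != 0 by rewrite sqrf_eq0 gt_eqF.
have s2n : s2 ^+ 2 != 0 by rewrite sqrf_eq0 gt_eqF.
have kn : 1 - rho ^+ 2 != 0 by rewrite gt_eqF.
move: (s1 ^+ 2) (s2 ^+ 2) s1n s2n => S1 S2 h1 h2.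
exact: alg_id.
Qed.

Lemma measurable_bvn (mu1 mu2 s1 s2 rho : R) :
  measurable_fun [set: R * R] (bvn_pdf mu1 mu2 s1 s2 rho).
Proof.
rewrite /bvn_pdf.
apply: measurable_funM => //.
apply: measurableT_comp => //.
apply: measurable_funM => //.
apply: measurableT_comp => //.
have m1 : measurable_fun [set: R * R] (fun v : R * R => (v.1 - mu1) / s1).
  apply: measurable_funM => //; apply: measurable_funB => //; exact: measurable_fst.
have m2 : measurable_fun [set: R * R] (fun v : R * R => (v.2 - mu2) / s2).
  apply: measurable_funM => //; apply: measurable_funB => //; exact: measurable_snd.
apply: measurable_funD => //.
  apply: measurable_funB => //.
    exact: measurable_funX.
  apply: measurable_funM => //; apply: measurable_funM => //.
exact: measurable_funX.
Qed.


Lemma indicX1 (A : set R) (x y : R) : \1_(A `*` [set: R]) (x, y) = \1_A x :> R.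
Proof.
rewrite !indicE; case: (boolP (x \in A)) => h.
  by rewrite mem_set //; split => //; exact/set_mem.
by rewrite memNset // => -[/mem_set]; rewrite (negbTE h).
Qed.

Lemma normal_pdf_gt0 (m s x : R) : 0 < s -> 0 < normal_pdf m s x.
Proof.
move=> s0; rewrite normal_pdfE ?gt_eqF //.
by rewrite mulr_gt0 ?normal_peak_gt0 ?gt_eqF // expR_gt0.
Qed.

Lemma bvn_gt0 (mu1 mu2 s1 s2 rho : R) v : 0 < s1 -> 0 < s2 -> 0 < rho -> rho < 1 ->
  0 < bvn_pdf mu1 mu2 s1 s2 rho v.
Proof.
move=> hs1 hs2 hr0 hr1; case: v => x y; rewrite bvn_fact //.
have hw2 : 0 < 1 - rho ^+ 2 by rewrite subr_gt0 expr_lt1 // ltW.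
by rewrite mulr_gt0 // normal_pdf_gt0 // mulr_gt0 // sqrtr_gt0.
Qed.

Local Notation LL := ((@lebesgue_measure R) \x (@lebesgue_measure R))%E.

Lemma marg1 (mu1 mu2 s1 s2 rho : R) (A : set R) : 0 < s1 -> 0 < s2 -> 0 < rho -> rho < 1 ->
  measurable A ->
  (\int[LL]_(v in [set: R * R]) ((\1_(A `*` [set: R]) v * bvn_pdf mu1 mu2 s1 s2 rho v)%:E)
   = \int[lebesgue_measure]_(x in A) (normal_pdf mu1 s1 x)%:E)%E.
Proof.
move=> hs1 hs2 hr0 hr1 mA.
have hw2 : 0 < 1 - rho ^+ 2 by rewrite subr_gt0 expr_lt1 // ltW.
rewrite fubini_tonelli1; last 2 first.
- apply/measurable_realfun.measurable_EFinP; apply: measurable_funM; last exact: measurable_bvn.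
  apply: measurable_indic; exact: measurableX.
- by move=> v; rewrite lee_fin mulr_ge0 // ltW // bvn_gt0.
rewrite [RHS]integral_mkcond; apply: eq_integral => x _.
rewrite /fubini_F.
under eq_integral do rewrite indicX1 bvn_fact // mulrA EFinM.
rewrite ge0_integralZl_EFin //; last 3 first.
- by move=> y _; rewrite lee_fin normal_pdf_ge0.
- apply/measurable_realfun.measurable_EFinP; exact: measurable_normal_pdf.
- by rewrite mulr_ge0 // normal_pdf_ge0.
rewrite integral_normal_pdf mule1 patchE indicE.
by case: ifP => _ /=; rewrite ?mul1r ?mul0r.
Qed.


Lemma integral_gt0 d (T : measurableType d) (mu : {measure set T -> \bar R})
  (A : set T) (f : T -> R) :
  measurable A -> measurable_fun A f -> (forall x, A x -> 0 < f x) ->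
  (0 < mu A)%E -> (0 < \int[mu]_(x in A) (f x)%:E)%E.
Proof.
move=> mA mf fpos muA.
pose B := fun n : nat => A `&` f @^-1` `]n.+1%:R^-1, +oo[.
have mB n : measurable (B n) by apply: mf => //.
have AB : A `<=` \bigcup_n B n.
  move=> x Ax; have fx := fpos x Ax.
  exists (Num.truncn (f x)^-1) => //; split => //=.
  have h := truncnS_gt (f x)^-1.
  move: (Num.truncn _) h => k h.
  rewrite in_itv /= andbT -[f x]invrK ltf_pV2 ?posrE ?invr_gt0 ?ltr0Sn //.
have [n hn] : exists n, (0 < mu (B n))%E.
  apply/not_existsP => H.
  have : mu.-negligible (\bigcup_n B n).
    apply: negligible_bigcup => k; exists (B k); split => //.
    apply/eqP; rewrite eq_le measure_ge0 andbT; rewrite leNgt; exact/negP/H.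
  case=> N [mN muN AN].
  have : (mu A <= mu N)%E by apply: le_measure => //; rewrite ?inE //; exact: subset_trans AN.
  by rewrite muN leNgt muA.
have Bsub : B n `<=` A by move=> x [].
apply: (lt_le_trans _ (ge0_subset_integral _ (mB n) mA _ _ Bsub)); last 2 first.
- by apply/measurable_realfun.measurable_EFinP.
- by move=> x Ax; rewrite lee_fin ltW // fpos.
apply: (lt_le_trans _ (ge0_le_integral (f1 := fun _ => (n.+1%:R^-1 : R)%:E) _ (mB n) _ _ _ _)); last 4 first.
- by move=> x _; rewrite lee_fin invr_ge0.
- exact: measurable_cst.
- by apply/measurable_realfun.measurable_EFinP; apply: measurable_funS mf.
- by move=> x [_ /=]; rewrite in_itv /= andbT lee_fin => /ltW.
have := integral_cst mu (mB n) (n.+1%:R^-1 : R)%:E; rewrite /cst => ->.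
by rewrite mule_gt0 // lte_fin invr_gt0 ltr0Sn.
Qed.


Lemma normal_std (mu s x : R) : 0 < s ->
  normal_pdf mu s ((x + mu / s) * s) * s = normal_pdf 0 1 x.
Proof.
move=> s0.
have hpi : 0 < pi *+ 2 :> R by rewrite pmulrn_lgt0 // pi_gt0.
rewrite !normal_pdfE ?gt_eqF ?ltr01 // /normal_peak /normal_fun.
have sp (s' : R) : 0 < s' -> Num.sqrt (s' ^+ 2 * pi *+ 2) = s' * Num.sqrt (pi *+ 2).
  by move=> h; rewrite -mulrnAr sqrtrM ?sqr_ge0 // sqrtr_sqr gtr0_norm.
rewrite !sp ?ltr01 // mul1r.
have -> : (x + mu / s) * s - mu = x * s.
  by rewrite mulrDl divfK ?gt_eqF // addrK.
rewrite subr0 expr1n exprMn.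
have e : - (x ^+ 2 * s ^+ 2) / (s ^+ 2 *+ 2) = - x ^+ 2 / 2.
  by field; rewrite gt_eqF.
rewrite e.
have qn : Num.sqrt (pi *+ 2) != 0 :> R by rewrite gt_eqF // sqrtr_gt0.
move: (Num.sqrt _) qn (expR _) => q qn E.
by field; rewrite qn gt_eqF.
Qed.

Lemma tail (mu s t : R) : 0 < s ->
  (\int[lebesgue_measure]_(x in `[(mu + s * t)%R, +oo[) (normal_pdf mu s x)%:E =
   \int[lebesgue_measure]_(x in `[t, +oo[) (normal_pdf 0 1 x)%:E)%E.
Proof.
move=> s0.
pose F := fun z : R => (z + mu / s) * s.
have F'E : F^`()%classic = cst s.
  apply/funext => x; rewrite /F derive1E deriveM // deriveD // derive_cst derive_id.
  by rewrite derive_cst scaler0 add0r addr0 /cst; exact: mulr1.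
have Ft : mu + s * t = F t by rewrite /F mulrDl divfK ?gt_eqF // addrC mulrC.
rewrite Ft (@increasing_ge0_integration_by_substitutiony R F (normal_pdf mu s) t).
- apply: eq_integral => x _; rewrite F'E /= /F; congr EFin; exact: normal_std.
- by move=> x y _ _ xy; rewrite /F ltr_pM2r // ltrD2r.
- by rewrite F'E => x _; exact: cst_continuous.
- rewrite F'E; exact: is_cvg_cst.
- rewrite F'E; exact: is_cvg_cst.
- split.
    move=> x _; rewrite /F; apply: derivableM => //; apply: derivableD => //.
  apply: cvg_at_right_filter; rewrite /F.
  apply: cvgM; last exact: cvg_cst.
  apply: cvgD; [exact: cvg_id | exact: cvg_cst].
- rewrite /F; apply: gt0_cvgMly => //; exact: cvg_addrr.
- apply: continuous_subspaceT; apply: continuous_normal_pdf; by rewrite gt_eqF.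
- by move=> x _; exact: normal_pdf_ge0.
Qed.

End H0.

Section H1.
Variable R : realType.
Local Open Scope classical_set_scope.
Local Notation LL := ((@lebesgue_measure R) \x (@lebesgue_measure R))%E.

Definition Tl (t : R) : \bar R :=
  (\int[lebesgue_measure]_(x in `[t, +oo[) (normal_pdf 0 1 x)%:E)%E.

Lemma Tl_ge0 t : (0 <= Tl t)%E.
Proof. by apply: integral_ge0 => x _; rewrite lee_fin normal_pdf_ge0. Qed.

Lemma Tl_le1 t : (Tl t <= 1)%E.
Proof.
rewrite -(integral_normal_pdf 0 1) /Tl.
apply: ge0_subset_integral => //.
- by apply/measurable_EFinP; exact: measurable_normal_pdf.
- by move=> x _; rewrite lee_fin normal_pdf_ge0.
Qed.

Lemma Tl_fin t : Tl t \is a fin_num.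
Proof.
by rewrite ge0_fin_numE ?Tl_ge0 // (le_lt_trans (Tl_le1 t)) // ltry.
Qed.

Lemma Tl_lt t t' : t < t' -> (Tl t' < Tl t)%E.
Proof.
move=> tt'.
rewrite {2}/Tl (@itv_bndbnd_setU _ _ (BLeft t) (BLeft t') (BInfty _ false)); last 2 first.
- by rewrite bnd_simp ltW.
- by [].
rewrite ge0_integral_setU //; last 3 first.
- by apply/measurable_EFinP; apply: measurable_funTS; exact: measurable_normal_pdf.
- by move=> x _; rewrite lee_fin normal_pdf_ge0.
- rewrite disj_set2E; apply/eqP/seteqP; split => // x [] /=.
  rewrite !in_itv /= andbT => /andP[_ h1] h2.
  by move: (lt_le_trans h1 h2); rewrite ltxx.
rewrite lteDr ?Tl_fin //.
apply: integral_gt0 => //.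
- by apply: measurable_funTS; exact: measurable_normal_pdf.
- by move=> x _; rewrite normal_pdf_gt0.
- suff H : (0 < lebesgue_measure (`[t, t'[ : set R))%E by exact: H.
  by rewrite lebesgue_measure_itv /= lte_fin tt' -EFinB lte_fin subr_gt0.
Qed.

Lemma swapLL (h : R * R -> R) : measurable_fun setT h -> (forall v, 0 <= h v) ->
  (\int[LL]_v (h v)%:E = \int[LL]_v (h (v.2, v.1))%:E)%E.
Proof.
move=> mh h0.
have ms : measurable_fun [set: R * R] (fun v : R * R => (v.2, v.1)).
  by apply: measurable_fun_pair; [exact: measurable_snd|exact: measurable_fst].
rewrite fubini_tonelli1; last 2 first.
- exact/measurable_EFinP.
- by move=> v; rewrite lee_fin.
rewrite [RHS]fubini_tonelli2 //; last 2 first.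
- apply/measurable_EFinP; exact: (measurableT_comp mh ms).
- by move=> v; rewrite lee_fin.
Qed.

End H1.

Section H2.
Variable R : realType.
Local Open Scope classical_set_scope.

Lemma indicX (A B : set R) (v : R * R) : \1_(A `*` B) v = \1_A v.1 * \1_B v.2 :> R.
Proof. rewrite !indicE in_setX; case: (v.1 \in A); case: (v.2 \in B); by rewrite /= ?mulr1n ?mulr0n ?mulr1 ?mul0r ?mulr0. Qed.

Lemma indic_ge (c x : R) : \1_(`[c, +oo[ : set R) x = if c <= x then 1 else 0 :> R.
Proof.
rewrite indicE; case: ifPn => h.
  by rewrite mem_set //= in_itv /= h.
by rewrite memNset //= in_itv /= (negbTE h).
Qed.

Lemma indic_lt (c x : R) : \1_(`]-oo, c[ : set R) x = if x < c then 1 else 0 :> R.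
Proof.
rewrite indicE; case: ifPn => h.
  by rewrite mem_set //= in_itv /= h.
by rewrite memNset //= in_itv /= (negbTE h).
Qed.

Lemma cond_z (m1 m2 s1 s2 rho z : R) : 0 < s1 -> 0 < s2 -> 0 < rho ->
  ((0 <= m1 + s1 * z) || (0 <= m2 + rho * s2 * z)) =
  (Num.min (- m1 / s1) (- m2 / (rho * s2)) <= z).
Proof.
move=> h1 h2 hr; rewrite ge_min !ler_pdivrMr ?mulr_gt0 //.
rewrite [z * s1]mulrC [z * (rho * s2)]mulrC.
by congr orb; apply/idP/idP; lra.
Qed.

Lemma pay1 (mu1 mu2 s1 s2 rho : R) v : 0 < s1 -> 0 < s2 -> 0 < rho ->
  optimal_payoff (posterior_mean mu1 mu2 s1 s2 rho Disc1 v) =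
  \1_(`[mu1 + s1 * Num.min (- mu1 / s1) (- mu2 / (rho * s2)), +oo[ `*` [set: R]) v.
Proof.
move=> h1 h2 hr; case: v => x y.
rewrite opt_payoffE /posterior_mean /= indicX1 indic_ge.
set t := Num.min _ _.
set z := (x - mu1) / s1.
have hx : x = mu1 + s1 * z by rewrite /z mulrC divfK ?gt_eqF //; lra.
clearbody z; subst x.
have -> : rho * s2 / s1 * (mu1 + s1 * z - mu1) = rho * s2 * z.
  by field; rewrite gt_eqF.
rewrite lerD2l ler_pM2l // cond_z //.
Qed.

Lemma pay2 (mu1 mu2 s1 s2 rho : R) v :
  optimal_payoff (posterior_mean mu1 mu2 s1 s2 rho Disc2 v) =
  optimal_payoff (posterior_mean mu2 mu1 s2 s1 rho Disc1 (v.2, v.1)).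
Proof. by rewrite !opt_payoffE /posterior_mean /= orbC. Qed.

Lemma payB (mu1 mu2 s1 s2 rho : R) v :
  optimal_payoff (posterior_mean mu1 mu2 s1 s2 rho DiscBoth v) =
  \1_(`[0, +oo[ `*` [set: R]) v + \1_(`]-oo, 0[ `*` `[0, +oo[) v.
Proof.
rewrite !opt_payoffE /posterior_mean /= !indicX !indic_ge indic_lt.
rewrite (_ : \1_[set: R] v.2 = 1); last by rewrite indicE mem_set.
case: (lerP 0 v.1) => h1; case: (lerP 0 v.2) => h2 /=;
  by rewrite ?mulr0 ?mul1r ?mulr1 ?mul0r ?addr0 ?add0r.
Qed.

Lemma payB_swap (mu1 mu2 s1 s2 rho : R) v :
  optimal_payoff (posterior_mean mu1 mu2 s1 s2 rho DiscBoth v) =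
  optimal_payoff (posterior_mean mu2 mu1 s2 s1 rho DiscBoth (v.2, v.1)).
Proof. by rewrite !opt_payoffE /posterior_mean /= orbC. Qed.

Lemma bvn_swap (mu1 mu2 s1 s2 rho : R) v :
  bvn_pdf mu1 mu2 s1 s2 rho v = bvn_pdf mu2 mu1 s2 s1 rho (v.2, v.1).
Proof.
rewrite /bvn_pdf /=; congr (_^-1 * expR (- _ / _)); ring.
Qed.

End H2.

Section H3.
Variable R : realType.
Local Open Scope classical_set_scope.
Local Notation LL := ((@lebesgue_measure R) \x (@lebesgue_measure R))%E.

Lemma opt_ge0 (m : 'I_2 -> R) : 0 <= optimal_payoff m.
Proof. by rewrite opt_payoffE; case: ifP. Qed.

Section P.
Variables (mu1 mu2 s1 s2 rho : R).
Hypotheses (hs1 : 0 < s1) (hs2 : 0 < s2) (hr0 : 0 < rho) (hr1 : rho < 1).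

Lemma E1_eq : expected_payoff mu1 mu2 s1 s2 rho Disc1 =
  Tl (Num.min (- mu1 / s1) (- mu2 / (rho * s2))).
Proof.
rewrite /expected_payoff.
under eq_integral => v _ do rewrite pay1 //.
rewrite marg1 //.
exact: tail.
Qed.

Lemma meas_int1 : measurable_fun [set: R * R]
  (fun v => optimal_payoff (posterior_mean mu1 mu2 s1 s2 rho Disc1 v) * bvn_pdf mu1 mu2 s1 s2 rho v).
Proof.
rewrite (_ : (fun v => _) = (fun v => \1_(`[mu1 + s1 * Num.min (- mu1 / s1) (- mu2 / (rho * s2)), +oo[ `*` [set: R]) v * bvn_pdf mu1 mu2 s1 s2 rho v)); last first.
  by apply/funext => v; rewrite pay1.
apply: measurable_funM; last exact: measurable_bvn.
apply: measurable_indic; apply: measurableX => //; exact: measurable_itv.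
Qed.

Lemma meas_intB : measurable_fun [set: R * R]
  (fun v => optimal_payoff (posterior_mean mu1 mu2 s1 s2 rho DiscBoth v) * bvn_pdf mu1 mu2 s1 s2 rho v).
Proof.
rewrite (_ : (fun v => _) = (fun v => (\1_(`[0, +oo[ `*` [set: R]) v + \1_(`]-oo, 0[ `*` `[0, +oo[) v) * bvn_pdf mu1 mu2 s1 s2 rho v)); last first.
  by apply/funext => v; rewrite payB.
apply: measurable_funM; last exact: measurable_bvn.
apply: measurable_funD; apply: measurable_indic; apply: measurableX => //; exact: measurable_itv.
Qed.

Lemma P1 : (\int[LL]_v ((\1_(`[0, +oo[ `*` [set: R]) v * bvn_pdf mu1 mu2 s1 s2 rho v)%:E)
   = Tl (- mu1 / s1))%E.
Proof.
rewrite marg1 //.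
rewrite /Tl -(@tail _ mu1 s1 (- mu1 / s1) hs1).
have -> : mu1 + s1 * (- mu1 / s1) = 0 by field; rewrite gt_eqF.
by [].
Qed.

End P.

Section P2.
Variables (mu1 mu2 s1 s2 rho : R).
Hypotheses (hs1 : 0 < s1) (hs2 : 0 < s2) (hr0 : 0 < rho) (hr1 : rho < 1).

Lemma E2_eq : expected_payoff mu1 mu2 s1 s2 rho Disc2 =
  expected_payoff mu2 mu1 s2 s1 rho Disc1.
Proof.
rewrite /expected_payoff.
pose h := fun v => optimal_payoff (posterior_mean mu2 mu1 s2 s1 rho Disc1 v) *
   bvn_pdf mu2 mu1 s2 s1 rho v.
rewrite [RHS](@swapLL _ h); last 2 first.
- exact: meas_int1.
- by move=> v; rewrite /h mulr_ge0 ?opt_ge0 // ltW // bvn_gt0.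
apply: eq_integral => v _; rewrite /h pay2 bvn_swap.
by case: v.
Qed.

Lemma EB_sym : expected_payoff mu1 mu2 s1 s2 rho DiscBoth =
  expected_payoff mu2 mu1 s2 s1 rho DiscBoth.
Proof.
rewrite /expected_payoff.
pose h := fun v => optimal_payoff (posterior_mean mu2 mu1 s2 s1 rho DiscBoth v) *
   bvn_pdf mu2 mu1 s2 s1 rho v.
rewrite [RHS](@swapLL _ h); last 2 first.
- exact: meas_intB.
- by move=> v; rewrite /h mulr_ge0 ?opt_ge0 // ltW // bvn_gt0.
apply: eq_integral => v _; rewrite /h payB_swap bvn_swap.
by case: v.
Qed.

Lemma P2 : (\int[LL]_v ((\1_([set: R] `*` `[0, +oo[) v * bvn_pdf mu1 mu2 s1 s2 rho v)%:E)
   = Tl (- mu2 / s2))%E.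
Proof.
rewrite -(P1 mu2 mu1 hs2 hs1 hr0 hr1).
pose h := fun v : R * R => \1_(`[0, +oo[ `*` [set: R]) v * bvn_pdf mu2 mu1 s2 s1 rho v.
rewrite (@swapLL _ h); last 2 first.
- apply: measurable_funM; last exact: measurable_bvn.
  apply: measurable_indic; apply: measurableX => //; exact: measurable_itv.
- by move=> v; rewrite /h mulr_ge0 // ltW // bvn_gt0.
apply: eq_integral => v _; rewrite /h bvn_swap !indicX /=.
by case: v => x y /=; rewrite (mulrC (\1_[set: R] x)).
Qed.

End P2.

End H3.

Section H4.
Variable R : realType.
Local Open Scope classical_set_scope.
Local Notation LL := ((@lebesgue_measure R) \x (@lebesgue_measure R))%E.

Lemma minl' (a b : R) : a <= b -> Num.min a b = a.
Proof. by move=> h; apply/le_anti; rewrite ge_min lexx le_min lexx h. Qed.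

Lemma minr' (a b : R) : b <= a -> Num.min a b = b.
Proof. by move=> h; apply/le_anti; rewrite ge_min lexx orbT le_min lexx h. Qed.

Lemma div_rho_lt (x s rho : R) : 0 < x -> 0 < s -> 0 < rho -> rho < 1 ->
  x / s < x / (rho * s).
Proof.
move=> hx hs h0 h1; rewrite -subr_gt0.
rewrite (_ : x / (rho * s) - x / s = x * (1 - rho) / (rho * s)).
  by rewrite divr_gt0 ?mulr_gt0 ?subr_gt0.
by field; rewrite !gt_eqF.
Qed.

Lemma E1_lt_EB (mu1 mu2 s1 s2 rho : R) :
  0 < s1 -> 0 < s2 -> 0 < rho -> rho < 1 -> mu1 < 0 -> mu2 < 0 ->
  (expected_payoff mu1 mu2 s1 s2 rho Disc1 < expected_payoff mu1 mu2 s1 s2 rho DiscBoth)%E.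
Proof.
move=> hs1 hs2 hr0 hr1 hm1 hm2.
rewrite E1_eq //.
have Eb_ge2 : (Tl (- mu2 / s2) <= expected_payoff mu1 mu2 s1 s2 rho DiscBoth)%E.
  rewrite -(P2 mu1 mu2 hs1 hs2 hr0 hr1) /expected_payoff.
  apply: ge0_le_integral => //.
  - by move=> v _; rewrite lee_fin mulr_ge0 // ltW // bvn_gt0.
  - apply/measurable_EFinP; apply: measurable_funM; last exact: measurable_bvn.
    apply: measurable_indic; apply: measurableX => //; exact: measurable_itv.
  - apply/measurable_EFinP; exact: meas_intB.
  - move=> v _; rewrite lee_fin payB ler_pM2r ?bvn_gt0 //.
    rewrite !indicX !indic_ge indic_lt !indicE !mem_set //.
    case: (lerP 0 v.1) => h1; case: (lerP 0 v.2) => h2 /=.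
    all: rewrite ?mulr0 ?mul1r ?mulr1 ?mul0r ?addr0 ?add0r ?ler01 //.
case: (leP (- mu1 / s1) (- mu2 / (rho * s2))) => hab.
- 
  rewrite /expected_payoff.
  under eq_integral => v _ do rewrite payB mulrDl EFinD.
  rewrite ge0_integralD //; last 4 first.
  + by move=> v _; rewrite lee_fin mulr_ge0 // ltW // bvn_gt0.
  + apply/measurable_EFinP; apply: measurable_funM; last exact: measurable_bvn.
    apply: measurable_indic; apply: measurableX => //; exact: measurable_itv.
  + by move=> v _; rewrite lee_fin mulr_ge0 // ltW // bvn_gt0.
  + apply/measurable_EFinP; apply: measurable_funM; last exact: measurable_bvn.
    apply: measurable_indic; apply: measurableX => //; exact: measurable_itv.
  rewrite (P1 mu1 mu2 hs1 hs2 hr0 hr1) lteDl ?Tl_fin //.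
  have -> : (\int[LL]_v ((\1_(`]-oo, 0%R[ `*` `[0%R, +oo[) v * bvn_pdf mu1 mu2 s1 s2 rho v)%:E)
     = \int[LL]_(v in `]-oo, 0%R[ `*` `[0%R, +oo[) (bvn_pdf mu1 mu2 s1 s2 rho v)%:E)%E.
    rewrite [RHS]integral_mkcond; apply: eq_integral => v _.
    by rewrite patchE indicE; case: (v \in _) => /=; rewrite ?mul1r ?mul0r.
  apply: integral_gt0 => //.
  + by apply: measurableX => //; exact: measurable_itv.
  + by apply: measurable_funTS; exact: measurable_bvn.
  + by move=> v _; exact: bvn_gt0.
  + suff H : (0 < ((@lebesgue_measure R) \x (@lebesgue_measure R)) (`]-oo, 0%R[ `*` `[0%R, +oo[))%E by exact: H.
    rewrite product_measure1E //; try exact: measurable_itv.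
    have H1 : (lebesgue_measure (`]-oo, 0%R[ : set R) = +oo)%E.
      by rewrite lebesgue_measure_itv /= ltNyr add0e.
    have H2 : (lebesgue_measure (`[0%R, +oo[ : set R) = +oo)%E.
      by rewrite lebesgue_measure_itv /= ltry oppr0 adde0.
    suff H : (0 < lebesgue_measure (`]-oo, 0%R[ : set R) * lebesgue_measure (`[0%R, +oo[ : set R))%E by exact: H.
    by rewrite H1 H2.
- apply: (lt_le_trans _ Eb_ge2); apply: Tl_lt.
  apply: div_rho_lt => //; rewrite oppr_gt0 //.
Qed.

End H4.

Theorem proposition3 (R : realType) (mu1 mu2 s1 s2 rho : R) :
  0 < s1 -> 0 < s2 -> 0 < rho -> rho < 1 ->
  mu1 < mu2 -> mu2 < 0 ->
  [/\ (s1 / mu1 < s2 / mu2 ->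
         (expected_payoff mu1 mu2 s1 s2 rho Disc2 < expected_payoff mu1 mu2 s1 s2 rho Disc1)%E),
      (s2 / mu2 < s1 / mu1 ->
         (expected_payoff mu1 mu2 s1 s2 rho Disc1 < expected_payoff mu1 mu2 s1 s2 rho Disc2)%E),
      (expected_payoff mu1 mu2 s1 s2 rho Disc1 < expected_payoff mu1 mu2 s1 s2 rho DiscBoth)%E
    & (expected_payoff mu1 mu2 s1 s2 rho Disc2 < expected_payoff mu1 mu2 s1 s2 rho DiscBoth)%E].
Proof.
move=> hs1 hs2 hr0 hr1 h12 hm2.
have hm1 : mu1 < 0 by apply: lt_trans h12 hm2.
have ha : 0 < - mu1 / s1 by rewrite divr_gt0 // oppr_gt0.
have hb : 0 < - mu2 / s2 by rewrite divr_gt0 // oppr_gt0.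
have hab' : - mu1 / s1 < - mu1 / (rho * s1) by apply: div_rho_lt; rewrite ?oppr_gt0.
have hba' : - mu2 / s2 < - mu2 / (rho * s2) by apply: div_rho_lt; rewrite ?oppr_gt0.
have E1 := E1_eq mu1 mu2 hs1 hs2 hr0 hr1.
have E2 : expected_payoff mu1 mu2 s1 s2 rho Disc2 =
    Tl (Num.min (- mu2 / s2) (- mu1 / (rho * s1))).
  by rewrite E2_eq // (E1_eq mu2 mu1 hs2 hs1 hr0 hr1).
have conv (m s : R) : s / m = - ((- m / s)^-1) :> R.
  by rewrite invf_div invrN mulrN opprK.
split.
- move=> hlt.
  have hab : - mu1 / s1 < - mu2 / s2.
    by move: hlt; rewrite (conv mu1) (conv mu2) ltrN2 ltf_pV2 ?posrE.
  rewrite E1 E2 (@minl' _ (- mu1 / s1)); last exact: ltW (lt_trans hab hba').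
  apply: Tl_lt; rewrite lt_min hab //.
- move=> hlt.
  have hab : - mu2 / s2 < - mu1 / s1.
    by move: hlt; rewrite (conv mu1) (conv mu2) ltrN2 ltf_pV2 ?posrE.
  rewrite E1 E2 (@minl' _ (- mu2 / s2)); last exact: ltW (lt_trans hab hab').
  apply: Tl_lt; rewrite lt_min hab //.
- exact: E1_lt_EB.
- rewrite E2_eq // EB_sym //; exact: E1_lt_EB.
Qed.
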